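(* Let $D^*$ be an absolutely continuous real random variable with cumulative distribution function $F(q)=\Pr\{D^*\le q\}$ and probability density function $f(q)=dF(q)/dq$, and assume $F$ is strictly increasing and continuous. Let $c>0$, $P>0$ and $q_0\ge 0$, and consider the one-round problem $$\min_{q_1}\; c(q_1-q_0)+P\bigl(1-F(q_1)\bigr)\qquad\text{subject to } q_0\le q_1 .$$ If there exist $\tilde q> q_0$ and $\hat\epsilon\ge 0$ such that $$\frac{c}{P}\le \frac{F(\tilde q)-F(q_0)}{\tilde q-q_0},\qquad \hat\epsilon\le 1-F(q_0),\qquad P=\frac{c}{f\bigl(F^{-1}(1-\hat\epsilon)\bigr)},$$ then there exists an $\epsilon\le 1-F(q_0)$ satisfying $P=c/f\bigl(F^{-1}(1-\epsilon)\bigr)$, and an optimal solution of the problem above is $q_1^*:=F^{-1}(1-\epsilon)$. Otherwise, an optimal solution is $q_1^*:=q_0$.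
   Context: $D^*$ models the (unknown) minimum amount of training data needed to reach a target performance; $c$ is the per-sample collection cost, $P$ the penalty for failing to reach the target, and $q_0$ the initial data set size. $F^{-1}$ denotes the quantile function $F^{-1}(p)=\inf\{q : F(q)\ge p\}$. *)

(* Defs.v *)
From HB Require Import structures.
From mathcomp Require Import all_boot all_order all_algebra.
From mathcomp Require Import all_classical all_reals all_analysis.
Set Implicit Arguments. Unset Strict Implicit. Unset Printing Implicit Defensive.
Import Order.TTheory GRing.Theory Num.Theory.
Local Open Scope classical_set_scope.
Local Open Scope ring_scope.

Definition quantile (R : realType) (F : R -> R) (p : R) : R :=
  inf [set q | p <= F q].

(* F^{-1}(p) is a genuine real number: the set {q | F q >= p} is nonempty
   and bounded below (otherwise the infimum would be +oo or -oo). *)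
Definition quantile_defined (R : realType) (F : R -> R) (p : R) : Prop :=
  [set q | p <= F q] !=set0 /\ has_lbound [set q | p <= F q].

Definition objective (R : realType) (F : R -> R) (c P q0 q1 : R) : R :=
  c * (q1 - q0) + P * (1 - F q1).

Definition is_optimal (R : realType) (F : R -> R) (c P q0 q1 : R) : Prop :=
  q0 <= q1 /\ forall q, q0 <= q -> objective F c P q0 q1 <= objective F c P q0 q.

Definition round_condition (R : realType) (F f : R -> R) (c P q0 : R) : Prop :=
  exists qt eh : R,
    q0 < qt /\ 0 <= eh /\
    c / P <= (F qt - F q0) / (qt - q0) /\
    eh <= 1 - F q0 /\
    quantile_defined F (1 - eh) /\
    P = c / f (quantile F (1 - eh)).

(* Main.v *)
Require Import Defs.
From HB Require Import structures.
From mathcomp Require Import all_boot all_order all_algebra.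
From mathcomp Require Import all_classical all_reals all_analysis.
From mathcomp Require Import ring lra.
Import Order.TTheory GRing.Theory Num.Theory numFieldNormedType.Exports.
Local Open Scope classical_set_scope.
Local Open Scope ring_scope.

Lemma key (R : realType) (F f : R -> R) (c P q0 qt : R) :
  (forall q, 0 <= F q <= 1) ->
  (forall q : R, is_derive q (1 : R) F (f q)) ->
  continuous F -> 0 < c -> 0 < P -> q0 < qt ->
  P * F q0 - c * q0 <= P * F qt - c * qt ->
  exists y, [/\ q0 < y, f y = c / P &
    forall t, q0 <= t -> P * F t - c * t <= P * F y - c * y].
Proof.
move=> F01 dF cF c0 P0 q0qt gqt.
pose g t := P * F t - c * t.
have dg : forall t : R, is_derive t (1:R) g (P * f t - c).
  move=> t; have := is_deriveB (is_deriveZ P (dF t)) (is_deriveZ c (@is_derive_id _ R^o t 1)).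
  rewrite /g /GRing.scale /= mulr1.
  by [].
have cg : continuous g.
  move=> x; apply: cvgB; first by apply: cvgMr; apply: cF.
  by apply: cvgMr; exact: cvg_id.
pose M := Num.max qt (q0 + P / c) + 1.
have qtM : qt < M by rewrite /M ltr_pwDr // le_max lexx.
have q0M : q0 + P / c < M by rewrite /M ltr_pwDr // le_max lexx orbT.
have gout : forall t, M <= t -> g t < g q0.
  move=> t Mt; rewrite /g.
  have /andP[F0 _] := F01 q0; have /andP[_ F1] := F01 t.
  have : q0 + P / c < t by exact: lt_le_trans Mt.
  rewrite -ltrBrDl ltr_pdivrMr // => h.
  have : P * F t <= P by rewrite -{2}(mulr1 P) ler_pM2l.
  have : 0 <= P * F q0 by rewrite mulr_ge0 // ltW.
  lra.
have q0Mle : q0 <= M by apply: ltW; apply: lt_trans q0qt qtM.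
have [x xin xmax] := EVT_max q0Mle (continuous_subspaceT cg).
have gxq0 : g q0 <= g x by apply: xmax; rewrite in_itv /= lexx q0Mle.
have glob : forall z, (forall t, t \in `[q0, M] -> g t <= g z) -> g q0 <= g z ->
    forall t, q0 <= t -> g t <= g z.
  move=> z zmax gz t q0t; have [tM|Mt] := ltP t M.
    by apply: zmax; rewrite in_itv /= q0t ltW.
  by apply: ltW; apply: lt_le_trans (gout _ Mt) gz.
have [y [yin ymax]] : exists y, (y \in `]q0, M[) /\ forall t, q0 <= t -> g t <= g y.
  have [gxqt|gqtx] := leP (g x) (g qt).
    exists qt; split; first by rewrite in_itv /= q0qt qtM.
    apply: glob; last exact: le_trans gxq0 gxqt.
    by move=> t /xmax /le_trans; apply.
  exists x; split; last exact: glob.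
  move: xin; rewrite !in_itv /= => /andP[xq0 xM].
  apply/andP; split.
    rewrite lt_neqAle xq0 andbT; apply/negP => /eqP ex; subst x.
    by move: gqtx; rewrite /g; lra.
  rewrite lt_neqAle xM andbT; apply/negP => /eqP ex; subst x.
  by have := gout M (lexx _); lra.
exists y; split.
- by move: yin; rewrite in_itv /= => /andP[].
- have h0 : is_derive y 1 g 0.
    apply: (derive1_at_max (ltW (lt_trans q0qt qtM))) => //.
    by move=> t; rewrite in_itv /= => /andP[/ltW ht _]; apply: ymax.
  have := @derive_val _ _ _ _ _ _ _ h0; rewrite (@derive_val _ _ _ _ _ _ _ (dg y)).
  move=> /eqP; rewrite subr_eq0 => /eqP <-.
  by rewrite [P * _]mulrC mulfK ?gt_eqF.
- exact: ymax.
Qed.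

Lemma quantile_at (R : realType) (F : R -> R) (y : R) :
  (forall x y, x < y -> F x < F y) ->
  quantile F (F y) = y /\ quantile_defined F (F y).
Proof.
move=> Finc.
have lb : lbound [set q | F y <= F q] y.
  move=> z /= Fz; rewrite leNgt; apply/negP => /Finc; rewrite ltNge Fz //.
have ne : [set q | F y <= F q] !=set0 by exists y => /=.
have hl : has_lbound [set q | F y <= F q] by exists y.
split=> //; rewrite /quantile; apply/eqP; rewrite eq_le; apply/andP; split.
  by apply: ge_inf => //=.
exact: lb_le_inf.
Qed.

Theorem theorem1 (R : realType) (d : measure_display) (T : measurableType d)
    (Pr : probability T R) (D : {RV Pr >-> R}) (F f : R -> R) (c P q0 : R) :
  (forall q, F q = fine (cdf D q)) ->
  distribution Pr D `<< (@lebesgue_measure R) ->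
  (forall q : R, is_derive q (1 : R) F (f q)) ->
  (forall x y, x < y -> F x < F y) ->
  continuous F ->
  0 < c -> 0 < P -> 0 <= q0 ->
  (round_condition F f c P q0 ->
     exists eps : R, [/\ eps <= 1 - F q0,
       quantile_defined F (1 - eps),
       P = c / f (quantile F (1 - eps)) &
       is_optimal F c P q0 (quantile F (1 - eps))]) /\
  (~ round_condition F f c P q0 -> is_optimal F c P q0 q0).
Proof.
move=> FE _ dF Finc cF c0 P0 q00.
have F01 : forall q, 0 <= F q <= 1.
  move=> q; rewrite FE; have := cdf_ge0 D q; have := cdf_le1 D q.
  by case: (cdf D q) => [r| |] //=; rewrite !lee_fin => -> ->.
have fyP : forall y, f y = c / P -> c / f y = P.
  by move=> y ->; rewrite invf_div mulrA mulrC mulrA mulVf ?gt_eqF // mul1r.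
have q1 : forall y, 1 - (1 - F y) = F y by move=> y; rewrite opprB addrC subrK.
split.
  case=> qt [eh [q0qt [eh0 [slope [ehle [qd Pe]]]]]].
  have gqt : P * F q0 - c * q0 <= P * F qt - c * qt.
    move: slope; rewrite ler_pdivlMr ?subr_gt0 // mulrAC ler_pdivrMr //.
    lra.
  have [y [q0y fy ymax]] := @key _ F f c P q0 _ F01 dF cF c0 P0 q0qt gqt.
  have [qy qdy] := @quantile_at _ F y Finc.
  exists (1 - F y); rewrite q1 qy; split => //.
  - by have := Finc _ _ q0y; lra.
  - by rewrite fyP.
  - split; first exact: ltW.
    move=> q q0q; have := ymax q q0q; rewrite /objective; lra.
move=> nrc; split => // q q0q.
have [//|lt] := leP (objective F c P q0 q0) (objective F c P q0 q).
exfalso; apply: nrc.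
have q0qt : q0 < q.
  rewrite lt_neqAle q0q andbT; apply/negP => /eqP e; subst q.
  by move: lt; rewrite ltxx.
have gqt : P * F q0 - c * q0 <= P * F q - c * q.
  by move: lt; rewrite /objective; lra.
have [y [q0y fy ymax]] := @key _ F f c P q0 _ F01 dF cF c0 P0 q0qt gqt.
have [qy qdy] := @quantile_at _ F y Finc.
exists q, (1 - F y); rewrite q1 qy.
split => //; split; first by have := F01 y; lra.
split.
  rewrite ler_pdivlMr ?subr_gt0 // mulrAC ler_pdivrMr //; lra.
split; first by have := Finc _ _ q0y; lra.
by split => //; rewrite fyP.
Qed.
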